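(* Let $X,Y$ be infinite dimensional Banach lattices which are relatively $s$-decomposable for some $1\le s\le\infty$, and suppose $\ell_p$ is finitely lattice representable in $Y_U$ for some $p\le s$. Then for every $q\in[1,\infty]$ with $1/p\ge1/q+1/s$, $X$ satisfies a lower $q$-estimate and $M_{[q]}(X)\le D_s(X,Y)$.
   Context: Banach lattices are real; disjoint means $|x|\wedge|y|=0$. $X,Y$ are relatively $s$-decomposable if there is $D$ with $\|\sum_{i=1}^n y_i\|_Y\le D(\sum_i(\|y_i\|_Y/\|x_i\|_X)^s)^{1/s}\|\sum_{i=1}^n x_i\|_X$ for all $n$ and all pairwise disjoint nonzero $x_i\in X$, pairwise disjoint nonzero $y_i\in Y$; $D_s(X,Y)$ is the infimum of such $D$. Lower $q$-estimate: $(\sum\|x_i\|^q)^{1/q}\le M\|\sum x_i\|$ for all finite families of pairwise disjoint elements; $M_{[q]}(X)$ is the infimum of such $M$. $\ell_p$ is finitely lattice representable in a Banach lattice $Z$ if for every $n$ and $\varepsilon>0$ there are pairwise disjoint $z_1,\dots,z_n\in Z$ with $\|a\|_{\ell_p^n}\le\|\sum a_iz_i\|_Z\le(1+\varepsilon)\|a\|_{\ell_p^n}$ for all $a\in\mathbb R^n$. $\mathfrak B_n(Y)$ is the set of $n$-tuples of pairwise disjoint norm-one elements of $Y$; $\|a\|_{Y_U(n)}:=\sup\{\|\sum_{i=1}^n a_iy_i\|_Y:(y_i)\in\mathfrak B_n(Y)\}$ for $a\in\mathbb R^n$, and $Y_U$ is the Banach lattice (coordinate-wise order) of real sequences with $\|a\|_{Y_U}:=\sup_n\|(a_i)_{i=1}^n\|_{Y_U(n)}<\infty$.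 *)

(* Defs.v *)
From HB Require Import structures.
From mathcomp Require Import all_boot all_order all_algebra.
From mathcomp Require Import all_classical all_reals all_analysis.
Set Implicit Arguments. Unset Strict Implicit. Unset Printing Implicit Defensive.
Import Order.TTheory GRing.Theory Num.Theory.
Import numFieldNormedType.Exports.
Local Open Scope classical_set_scope.
Local Open Scope ring_scope.

Record BanachLattice (R : realType) := BanachLatticeMk {
  blT :> completeNormedModType R;
  ble : blT -> blT -> Prop;
  bjoin : blT -> blT -> blT;
  ble_refl : forall x, ble x x;
  ble_anti : forall x y, ble x y -> ble y x -> x = y;
  ble_trans : forall x y z, ble x y -> ble y z -> ble x z;
  bjoin_lub : forall x y z, ble (bjoin x y) z <-> (ble x z /\ ble y z);
  ble_add : forall x y z, ble x y -> ble (x + z) (y + z);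
  ble_scale : forall (a : R) x y, 0 <= a -> ble x y -> ble (a *: x) (a *: y);
  bnorm_lattice : forall x y, ble (bjoin x (- x)) (bjoin y (- y)) -> `|x| <= `|y|
}.

Section BL.
Context {R : realType}.

Definition babs (X : BanachLattice R) (x : X) : X := bjoin x (- x).
Definition bmeet (X : BanachLattice R) (x y : X) : X := - bjoin (- x) (- y).

Definition bdisjoint (X : BanachLattice R) (x y : X) : Prop :=
  bmeet (babs x) (babs y) = 0.

Definition pw_disjoint (X : BanachLattice R) (n : nat) (x : 'I_n -> X) : Prop :=
  forall i j : 'I_n, i != j -> bdisjoint (x i) (x j).

Definition infinite_dim (X : BanachLattice R) : Prop :=
  forall n : nat, exists v : 'I_n -> X,
    forall c : 'I_n -> R, \sum_(i < n) c i *: v i = 0 -> forall i, c i = 0.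

(* exponents live in \bar R (the values used are in [1, +oo]);
   inv_exp p = 1/p with the convention 1/oo = 0 *)
Definition inv_exp (p : \bar R) : R :=
  match p with EFin r => r^-1 | _ => 0 end.

Definition lpnorm (p : \bar R) (n : nat) (a : 'I_n -> R) : R :=
  match p with
  | EFin r => (\sum_(i < n) `|a i| `^ r) `^ r^-1
  | _ => \big[Num.max/0]_(i < n) `|a i|
  end.

Definition rel_decomp_const (X Y : BanachLattice R) (s : \bar R) (D : R) : Prop :=
  forall (n : nat) (x : 'I_n -> X) (y : 'I_n -> Y),
    pw_disjoint x -> (forall i, x i != 0) ->
    pw_disjoint y -> (forall i, y i != 0) ->
    `|\sum_(i < n) y i| <= D * lpnorm s (fun i => `|y i| / `|x i|) * `|\sum_(i < n) x i|.

Definition rel_decomposable (X Y : BanachLattice R) (s : \bar R) : Prop :=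
  exists D : R, rel_decomp_const X Y s D.

Definition Ds (X Y : BanachLattice R) (s : \bar R) : \bar R :=
  ereal_inf [set D%:E | D in [set D : R | rel_decomp_const X Y s D]].

Definition lower_est_const (X : BanachLattice R) (q : \bar R) (M : R) : Prop :=
  forall (n : nat) (x : 'I_n -> X), pw_disjoint x ->
    lpnorm q (fun i => `|x i|) <= M * `|\sum_(i < n) x i|.

Definition lower_estimate (X : BanachLattice R) (q : \bar R) : Prop :=
  exists M : R, lower_est_const X q M.

Definition Mq (X : BanachLattice R) (q : \bar R) : \bar R :=
  ereal_inf [set M%:E | M in [set M : R | lower_est_const X q M]].

Definition frakB (Y : BanachLattice R) (n : nat) : set ('I_n -> Y) :=
  [set y | pw_disjoint y /\ forall i, `|y i| = 1].
Arguments frakB : clear implicits.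

Definition YUn_norm (Y : BanachLattice R) (n : nat) (a : 'I_n -> R) : \bar R :=
  ereal_sup [set (`|\sum_(i < n) a i *: y i|)%:E | y in frakB Y n].

(* ||a||_{Y_U} for a real sequence a (possibly +oo; Y_U = {a | ||a|| < oo}) *)
Definition YU_norm (Y : BanachLattice R) (a : nat -> R) : \bar R :=
  ereal_sup [set YUn_norm Y (fun i : 'I_n => a i) | n in [set: nat]].

Definition in_YU (Y : BanachLattice R) (a : nat -> R) : Prop :=
  (YU_norm Y a < +oo)%E.

(* disjointness in Y_U for the coordinatewise order: min(|a_k|,|b_k|) = 0 *)
Definition seq_disjoint (a b : nat -> R) : Prop :=
  forall k, Num.min `|a k| `|b k| = 0.

Definition lp_fin_rep_YU (Y : BanachLattice R) (p : \bar R) : Prop :=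
  forall (n : nat) (eps : R), 0 < eps ->
  exists z : 'I_n -> (nat -> R),
    (forall i, in_YU Y (z i)) /\
    (forall i j, i != j -> seq_disjoint (z i) (z j)) /\
    forall a : 'I_n -> R,
      ((lpnorm p a)%:E <= YU_norm Y (fun k => (\sum_(i < n) a i * z i k)%R))%E /\
      (YU_norm Y (fun k => (\sum_(i < n) a i * z i k)%R) <= ((1 + eps) * lpnorm p a)%R%:E)%E.

End BL.

(* Main.v *)
Require Import Defs.
From HB Require Import structures.
From mathcomp Require Import all_boot all_order all_algebra.
From mathcomp Require Import all_classical all_reals all_analysis.
From mathcomp Require Import ring lra.
Import Order.TTheory GRing.Theory Num.Theory.
Local Open Scope ring_scope.

Set Implicit Arguments.

Section Lat.
Context {R : realType} (L : BanachLattice R).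
Local Notation "x <=: y" := (ble x y) (at level 70).
Implicit Types x y z u v a b c : L.

Lemma bleD [x y u v : L] : x <=: y -> u <=: v -> x + u <=: y + v.
Proof.
move=> h1 h2; apply: (ble_trans (ble_add u h1)).
by rewrite (addrC y u) (addrC y v); apply: ble_add.
Qed.

Lemma bleN [x y : L] : x <=: y -> - y <=: - x.
Proof.
move=> h; have := ble_add (- x - y) h.
by rewrite addrA subrr add0r addrCA subrr addr0.
Qed.

Lemma bleNE x y : (- y <=: - x) <-> (x <=: y).
Proof. split; last exact: bleN. by move/bleN; rewrite !opprK. Qed.

Lemma bjoinl x y : x <=: bjoin x y.
Proof. by have [] := (bjoin_lub x y (bjoin x y)).1 (ble_refl _). Qed.
Lemma bjoinr x y : y <=: bjoin x y.
Proof. by have [] := (bjoin_lub x y (bjoin x y)).1 (ble_refl _). Qed.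
Lemma bjoin_le [x y z : L] : x <=: z -> y <=: z -> bjoin x y <=: z.
Proof. by move=> h1 h2; apply/bjoin_lub. Qed.

Lemma bjoinC x y : bjoin x y = bjoin y x.
Proof. by apply: ble_anti; apply: bjoin_le; [apply: bjoinr|apply: bjoinl|apply: bjoinr|apply: bjoinl]. Qed.

Lemma bjoinD x y c : bjoin (x + c) (y + c) = bjoin x y + c.
Proof.
apply: ble_anti.
  by apply: bjoin_le; apply: ble_add; [apply: bjoinl|apply: bjoinr].
suff h : bjoin x y <=: bjoin (x + c) (y + c) - c.
  by have := ble_add c h; rewrite subrK.
apply: bjoin_le.
  by have := ble_add (- c) (bjoinl (x + c) (y + c)); rewrite addrK.
by have := ble_add (- c) (bjoinr (x + c) (y + c)); rewrite addrK.
Qed.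

Lemma bjoin_mono [x y x' y' : L] : x <=: x' -> y <=: y' -> bjoin x y <=: bjoin x' y'.
Proof.
move=> h1 h2; apply: bjoin_le.
  exact: ble_trans h1 (bjoinl _ _).
exact: ble_trans h2 (bjoinr _ _).
Qed.

Lemma bmeet_glb x y z : (z <=: bmeet x y) <-> (z <=: x /\ z <=: y).
Proof.
rewrite /bmeet; split.
  move=> h; have := bleN h; rewrite opprK => /bjoin_lub [h1 h2].
  by split; apply/bleNE.
move=> [h1 h2]; rewrite -[z]opprK; apply: bleN.
by apply: bjoin_le; apply: bleN.
Qed.

Lemma bmeetl x y : bmeet x y <=: x.
Proof. by have [] := (bmeet_glb x y (bmeet x y)).1 (ble_refl _). Qed.
Lemma bmeetr x y : bmeet x y <=: y.
Proof. by have [] := (bmeet_glb x y (bmeet x y)).1 (ble_refl _). Qed.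
Lemma bmeet_mono [x y x' y' : L] : x <=: x' -> y <=: y' -> bmeet x y <=: bmeet x' y'.
Proof.
move=> h1 h2; apply/bmeet_glb; split.
  exact: ble_trans (bmeetl _ _) h1.
exact: ble_trans (bmeetr _ _) h2.
Qed.

Lemma bjoin_meet x y : bjoin x y = x + y - bmeet x y.
Proof.
rewrite /bmeet opprK addrC -bjoinD bjoinC; congr bjoin.
  by rewrite addKr.
by rewrite addrCA addNr addr0.
Qed.

Lemma bjoinZ (m : R) x y : 0 < m -> bjoin (m *: x) (m *: y) = m *: bjoin x y.
Proof.
move=> m0; apply: ble_anti.
  by apply: bjoin_le; apply: ble_scale; rewrite ?ltW //; [apply: bjoinl|apply: bjoinr].
have mi : 0 <= m^-1 by rewrite invr_ge0 ltW.
suff h : bjoin x y <=: m^-1 *: bjoin (m *: x) (m *: y).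
  have := ble_scale (ltW m0) h; rewrite scalerA divff ?gt_eqF // scale1r.
  by [].
apply: bjoin_le.
  have := ble_scale mi (bjoinl (m *: x) (m *: y)).
  by rewrite scalerA mulVf ?gt_eqF // scale1r.
have := ble_scale mi (bjoinr (m *: x) (m *: y)).
by rewrite scalerA mulVf ?gt_eqF // scale1r.
Qed.

Lemma bmeetZ (m : R) x y : 0 < m -> bmeet (m *: x) (m *: y) = m *: bmeet x y.
Proof. by move=> m0; rewrite /bmeet -!scalerN bjoinZ // scalerN. Qed.

Lemma babs_ge x : x <=: babs x. Proof. exact: bjoinl. Qed.
Lemma babs_geN x : - x <=: babs x. Proof. exact: bjoinr. Qed.

Lemma babs_ge0 x : 0 <=: babs x.
Proof.
have h := bleD (babs_ge x) (babs_geN x); rewrite subrr in h.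
have h2 : (0:R) <= 2^-1 by rewrite invr_ge0.
have := ble_scale h2 h; rewrite scaler0 scalerDr -scalerDl.
have -> : (2^-1 + 2^-1 : R) = 1 by lra.
by rewrite scale1r.
Qed.

Lemma babs0 : babs (0 : L) = 0.
Proof.
apply: ble_anti; last exact: babs_ge0.
by rewrite /babs oppr0; apply: bjoin_le; apply: ble_refl.
Qed.

Lemma babsN x : babs (- x) = babs x.
Proof. by rewrite /babs opprK bjoinC. Qed.

Lemma babs_triangle u v : babs (u + v) <=: babs u + babs v.
Proof.
apply: bjoin_le; first exact: bleD (babs_ge _) (babs_ge _).
by rewrite opprD; apply: bleD (babs_geN _) (babs_geN _).
Qed.

Lemma babs_scale (c : R) u : babs (c *: u) <=: `|c| *: babs u.
Proof.
have [c0|c0] := leP 0 c.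
  rewrite ger0_norm //; apply: bjoin_le; first exact: ble_scale c0 (babs_ge _).
  by rewrite -scalerN; apply: ble_scale c0 (babs_geN _).
rewrite ltr0_norm //; apply: bjoin_le.
  by rewrite -[c *: u]opprK -scaleNr -scalerN; apply: ble_scale (babs_geN _); rewrite oppr_ge0 ltW.
by rewrite -scaleNr; apply: ble_scale (babs_ge _); rewrite oppr_ge0 ltW.
Qed.

Lemma bmeet0 [a : L] : 0 <=: a -> bmeet 0 a = 0.
Proof.
move=> a0; apply: ble_anti; first exact: bmeetl.
by apply/bmeet_glb; split => //; apply: ble_refl.
Qed.

Lemma bmeet_ge0 [a b : L] : 0 <=: a -> 0 <=: b -> 0 <=: bmeet a b.
Proof. by move=> *; apply/bmeet_glb. Qed.

Lemma bmeetDle [a b c : L] : 0 <=: a -> 0 <=: b -> 0 <=: c ->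
  bmeet (a + b) c <=: bmeet a c + bmeet b c.
Proof.
move=> a0 b0 c0; set d := bmeet (a + b) c.
have h1 : d - a <=: bmeet b c.
  apply/bmeet_glb; split.
    by have := ble_add (- a) (bmeetl (a + b) c); rewrite addrAC subrr add0r.
  apply: ble_trans (bleD (bmeetr (a + b) c) (bleN a0)) _.
  by rewrite oppr0 addr0; apply: ble_refl.
have h2 : d - bmeet b c <=: bmeet a c.
  apply/bmeet_glb; split.
    by have := ble_add (- bmeet b c) (ble_add a h1); rewrite subrK addrAC subrr add0r.
  apply: ble_trans (bleD (bmeetr (a + b) c) (bleN (bmeet_ge0 b0 c0))) _.
  by rewrite oppr0 addr0; apply: ble_refl.
by have := ble_add (bmeet b c) h2; rewrite subrK.
Qed.

Lemma bdisj_sym [u v : L] : bdisjoint u v -> bdisjoint v u.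
Proof.
rewrite /bdisjoint /bmeet => h; rewrite bjoinC; exact: h.
Qed.

Lemma bdisj0 v : bdisjoint 0 v.
Proof. by rewrite /bdisjoint babs0 bmeet0 //; apply: babs_ge0. Qed.

Lemma bdisjD [u u' v : L] : bdisjoint u v -> bdisjoint u' v -> bdisjoint (u + u') v.
Proof.
rewrite /bdisjoint => h1 h2; apply: ble_anti; last first.
  by apply: bmeet_ge0; apply: babs_ge0.
apply: ble_trans (bmeet_mono (babs_triangle u u') (ble_refl _)) _.
apply: ble_trans (bmeetDle (babs_ge0 _) (babs_ge0 _) (babs_ge0 _)) _.
by rewrite h1 h2 addr0; apply: ble_refl.
Qed.

Lemma bdisjZ (c : R) [u v : L] : bdisjoint u v -> bdisjoint (c *: u) v.
Proof.
rewrite /bdisjoint => h; apply: ble_anti; last first.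
  by apply: bmeet_ge0; apply: babs_ge0.
set m := Num.max `|c| 1.
have m0 : 0 < m by rewrite lt_max ltr01 orbT.
have le1 : forall a : L, 0 <=: a -> forall k : R, 0 <= k -> k <= m -> k *: a <=: m *: a.
  move=> a a0 k k0 km; have := ble_add (k *: a) (ble_scale (a:=m - k) _ a0).
  rewrite scaler0 add0r -scalerDl subrK; apply; by rewrite subr_ge0.
apply: ble_trans (bmeet_mono (x' := m *: babs u) (y' := m *: babs v) _ _) _.
- apply: ble_trans (babs_scale c u) _; apply: le1; rewrite ?le_max ?lexx //.
  exact: babs_ge0.
- have := le1 _ (babs_ge0 v) 1 ler01; rewrite scale1r; apply.
  by rewrite le_max lexx orbT.
rewrite bmeetZ // h scaler0; exact: ble_refl.
Qed.

Lemma bdisj_sum (I : Type) (r : seq I) (P : pred I) (F : I -> L) v :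
  (forall i, P i -> bdisjoint (F i) v) -> bdisjoint (\sum_(i <- r | P i) F i) v.
Proof.
move=> h; apply: (big_ind (fun u => bdisjoint u v)) => //.
  exact: bdisj0.
by move=> *; apply: bdisjD.
Qed.

Lemma bdisj_norm [a b : L] : bdisjoint a b -> `|a| <= `|a + b|.
Proof.
rewrite /bdisjoint => h; apply: bnorm_lattice; rewrite -/(babs a) -/(babs (a+b)).
set A := babs a; set B := babs b.
have hb : - B <=: b by rewrite -[b]opprK; apply: bleN; apply: babs_geN.
have hb' : - B <=: - b by apply: bleN; apply: babs_ge.
have e1 : a - B <=: babs (a + b) by apply: ble_trans (babs_ge _); rewrite addrC (addrC a); apply: ble_add.
have e2 : - a - B <=: babs (a + b).
  apply: ble_trans (babs_geN _); rewrite opprD addrC (addrC (-a)); exact: ble_add.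
have e3 : A - B <=: babs (a + b) by rewrite /A /babs -bjoinD; apply: bjoin_le.
have e4 : bjoin (A - B) (B - B) <=: babs (a + b).
  by apply: bjoin_le => //; rewrite subrr; apply: babs_ge0.
by move: e4; rewrite bjoinD bjoin_meet h subr0 addrK.
Qed.

End Lat.

Section Rl.
Context {R : realType}.
Implicit Types (p : \bar R).

Lemma bigmax_ge0 n (F : 'I_n -> R) : 0 <= \big[Num.max/0]_(i < n) F i.
Proof. exact: bigmax_ge_id. Qed.

Lemma lp_ge0 p n (a : 'I_n -> R) : 0 <= lpnorm p a.
Proof. by case: p => [r| |] /=; rewrite ?powR_ge0 ?bigmax_ge0. Qed.

Lemma lp_mono p n (a b : 'I_n -> R) : (1 <= p)%E ->
  (forall i, `|a i| <= `|b i|) -> lpnorm p a <= lpnorm p b.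
Proof.
case: p => [r| |] //= hr h; last by apply: le_bigmax2 => i _; exact: h.
rewrite lee_fin in hr.
apply: ge0_ler_powR; rewrite ?invr_ge0 ?nnegrE; try lra.
- by apply: sumr_ge0 => i _; rewrite powR_ge0.
- by apply: sumr_ge0 => i _; rewrite powR_ge0.
apply: ler_sum => i _; apply: ge0_ler_powR; rewrite ?nnegrE //; lra.
Qed.

Lemma lp_drop p n (a : 'I_n.+1 -> R) i : (1 <= p)%E ->
  lpnorm p (fun k => a (lift i k)) <= lpnorm p a.
Proof.
case: p => [r| |] //= hr.
  rewrite lee_fin in hr.
  apply: ge0_ler_powR; rewrite ?invr_ge0 ?nnegrE; try lra.
  - by apply: sumr_ge0 => k _; rewrite powR_ge0.
  - by apply: sumr_ge0 => k _; rewrite powR_ge0.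
  by rewrite (bigD1_ord i) //= lerDr powR_ge0.
apply/bigmax_leP; split; first exact: bigmax_ge0.
by move=> k _; apply: le_bigmax.
Qed.

Lemma lp_scale p n (a : 'I_n -> R) (c : R) : (1 <= p)%E -> 0 <= c ->
  lpnorm p (fun i => c * a i) = c * lpnorm p a.
Proof.
case: p => [r| |] //= hr c0.
  rewrite lee_fin in hr.
  under eq_bigr do rewrite normrM (ger0_norm c0) (powRM _ c0 (normr_ge0 _)).
  have S0 : 0 <= \sum_(i < n) `|a i| `^ r by apply: sumr_ge0 => i _; exact: powR_ge0.
  rewrite -mulr_sumr powRM ?powR_ge0 //.
  by rewrite -powRrM mulfV ?powRr1 //; lra.
apply/eqP; rewrite eq_le; apply/andP; split.
  apply/bigmax_leP; split; first by rewrite mulr_ge0 // bigmax_ge0.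
  move=> i _; rewrite normrM ger0_norm //; apply: ler_wpM2l => //.
  exact: le_bigmax.
have [->|cp] := eqVneq c 0; first by rewrite mul0r bigmax_ge0.
have cgt : 0 < c by rewrite lt_def cp.
rewrite -ler_pdivlMl //; apply/bigmax_leP; split.
  by rewrite mulr_ge0 ?invr_ge0 // bigmax_ge0.
move=> i _; rewrite ler_pdivlMl //.
apply: le_trans (le_bigmax _ (fun i => `|c * a i|) i).
by rewrite normrM ger0_norm.
Qed.

Lemma lp_unit p n (i : 'I_n) : (1 <= p)%E ->
  lpnorm p (fun j => (j == i)%:R) = 1.
Proof.
case: p => [r| |] //= hr.
  rewrite lee_fin in hr.
  rewrite (bigD1 i) //= eqxx normr1 powR1 big1 ?addr0 ?powR1 //.
  move=> j /negPf ->; rewrite normr0 powR0 //; apply/eqP; lra.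
apply/eqP; rewrite eq_le; apply/andP; split.
  apply/bigmax_leP; split => // j _; rewrite normr_nat.
  by case: (j == i).
by apply: le_trans (le_bigmax _ (fun j => `|(j == i)%:R|) i); rewrite eqxx normr1.
Qed.

End Rl.

Unset Implicit Arguments.

Section Rl2.
Context {R : realType}.
Implicit Types (p : \bar R).

Lemma powRK (x r : R) : 0 <= x -> r != 0 -> (x `^ r) `^ r^-1 = x.
Proof. by move=> x0 r0; rewrite -powRrM mulfV // powRr1. Qed.
Lemma powRKV (x r : R) : 0 <= x -> r != 0 -> (x `^ r^-1) `^ r = x.
Proof. by move=> x0 r0; rewrite -powRrM mulVf // powRr1. Qed.

Lemma lp_entry p n (a : 'I_n -> R) i : (1 <= p)%E -> `|a i| <= lpnorm p a.
Proof.
case: p => [r| |] //= hr; last exact: (le_bigmax _ (fun i => `|a i|) i).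
rewrite lee_fin in hr.
have r0 : r != 0 by apply/eqP; lra.
rewrite -{1}(powRK _ _ (normr_ge0 (a i)) r0).
apply: ge0_ler_powR; rewrite ?invr_ge0 ?nnegrE ?powR_ge0; try lra.
  by apply: sumr_ge0 => k _; rewrite powR_ge0.
rewrite (bigD1 i) //= lerDl; apply: sumr_ge0 => k _; exact: powR_ge0.
Qed.

Lemma lp_exp_mono (r q : \bar R) n (a : 'I_n -> R) : (1 <= r)%E -> (r <= q)%E ->
  lpnorm q a <= lpnorm r a.
Proof.
move=> hr hrq.
case: q hrq => [Q| |] hrq; last by case: r hr hrq.
  2: { apply/bigmax_leP; split; first exact: lp_ge0.
       move=> i _; exact: lp_entry. }
case: r hr hrq => [r| |] // hr hrq.
rewrite !lee_fin in hr hrq.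
have r0 : r != 0 by apply/eqP; lra.
have Q0 : Q != 0 by apply/eqP; lra.
have hQ : (1 <= Q%:E)%E by rewrite lee_fin; lra.
have hR : (1 <= r%:E)%E by rewrite lee_fin.
have hQi : 0 <= Q^-1 by rewrite invr_ge0; lra.
have hQr : 0 <= Q - r by lra.
set S := lpnorm (r%:E) a.
have S0 : 0 <= S := lp_ge0 _ _.
have ent : forall i, `|a i| <= S by move=> i; apply: lp_entry; rewrite lee_fin.
have SE : lpnorm r%:E a = S by [].
clearbody S.
have [Se|Sn] := eqVneq S 0.
  have a0 : forall i, `|a i| = 0 by move=> i; apply/eqP; rewrite eq_le normr_ge0 andbT -Se.
  rewrite /= big1 ?powR0 ?invr_eq0 // => i _; rewrite a0 powR0 //.
have Sp : 0 < S by rewrite lt_def Sn.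
pose u i := a i / S.
have au : a = (fun i => S * u i) by apply: funext => i; rewrite /u mulrC divfK.
have uS : lpnorm (r%:E) u = 1.
  apply: (mulfI Sn); rewrite mulr1 -lp_scale //; try exact: ltW.
  by rewrite -au SE.
have u1 : forall i, `|u i| <= 1 by move=> i; rewrite -uS; exact: lp_entry.
rewrite au lp_scale //; try exact: ltW.
rewrite -[X in _ <= X]mulr1 ler_wpM2l //; try exact: ltW.
have sr : \sum_(i < n) `|u i| `^ r = 1.
  move: uS => /= /(congr1 (fun t => t `^ r)); rewrite powRKV ?powR1 //.
  by apply: sumr_ge0 => i _; rewrite powR_ge0.
rewrite /=; have -> : (1 : R) = 1 `^ Q^-1 by rewrite powR1.
apply: ge0_ler_powR; rewrite ?nnegrE //.
  by apply: sumr_ge0 => i _; rewrite powR_ge0.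
rewrite -sr; apply: ler_sum => i _.
have [u0|un] := eqVneq `|u i| 0; first by rewrite u0 !powR0.
have -> : Q = r + (Q - r) by rewrite addrC subrK.
rewrite powRD; last by rewrite un implybT.
rewrite -[X in _ <= X]mulr1 ler_wpM2l ?powR_ge0 //.
have -> : (1 : R) = 1 `^ (Q - r) by rewrite powR1.
by apply: ge0_ler_powR; rewrite ?nnegrE.
Qed.

End Rl2.

Section Rl3.
Context {R : realType}.

Lemma holder_step (p s q : \bar R) n (t : 'I_n -> R) (C : R) :
 (1 <= p)%E -> (p <= s)%E -> (1 <= q)%E -> inv_exp q + inv_exp s <= inv_exp p ->
 (forall i, 0 <= t i) -> 0 <= C ->
 (forall b : 'I_n -> R, (forall i, t i = 0 -> b i = 0) ->
    lpnorm p b <= C * lpnorm s (fun i => `|b i| / t i)) ->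
 lpnorm q t <= C.
Proof.
move=> hp hps hq hinv t0 C0 hb.
have hs : (1 <= s)%E by apply: le_trans hps.
have ent : forall j, t j <= C.
  move=> j; have [->//|tj] := eqVneq (t j) 0.
  have := hb (fun i => t j * (i == j)%:R) _.
  rewrite lp_scale // lp_unit // mulr1.
  have -> : (fun i => `|t j * (i == j)%:R| / t i) = (fun i => (i == j)%:R).
    apply: funext => i; have [->|ij] := eqVneq i j.
      by rewrite mulr1 ger0_norm // divff.
    by rewrite mulr0 normr0 mul0r.
  rewrite lp_unit // mulr1; apply.
  move=> i ti; have [ij|ij] := eqVneq i j; last by rewrite mulr0.
  by move: tj; rewrite -ij ti eqxx.
case: q hq hinv => [Q| |] hq hinv //; last first.
  apply/bigmax_leP; split => // i _; rewrite ger0_norm //; exact: ent.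
rewrite lee_fin in hq.
have Qi : 0 < Q^-1 by rewrite invr_gt0; lra.
case: s hps hs hinv hb => [S| |] hps hs hinv hb //; last first.
  (* s = +oo *)
  case: p hp hps hinv hb => [P| |] hp hps hinv hb //=; last by move: hinv => /=; lra.
  move: hinv => /= hinv; rewrite lee_fin in hp.
  have hPQ : P <= Q.
    by rewrite -lef_pV2 ?posrE; lra.
  apply: (@le_trans _ _ (lpnorm P%:E t)).
  by have := @lp_exp_mono _ P%:E Q%:E n t; apply; rewrite lee_fin.
  apply: le_trans (hb t (fun i ti => ti)) _.
  rewrite -[X in _ <= X]mulr1 ler_wpM2l //.
  apply/bigmax_leP; split => // i _.
  have [->|ti] := eqVneq (t i) 0; first by rewrite normr0 mul0r normr0.
  by rewrite (ger0_norm (t0 i)) divff // normr1.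
case: p hp hps hinv hb => [P| |] hp hps hinv hb //.
rewrite !lee_fin in hp hps hs; move: hinv => /= hinv.
have P0 : 0 < P by lra.
have S0 : 0 < S by lra.
have Pn : P != 0 by rewrite gt_eqF.
have Sn : S != 0 by rewrite gt_eqF.
have PS : P < S.
  rewrite lt_def hps andbT; apply/eqP => ePS; move: hinv; rewrite ePS; lra.
have hSP : S^-1 < P^-1 by rewrite ltf_pV2 ?posrE.
set rho := P^-1 - S^-1.
have rho0 : 0 < rho by rewrite subr_gt0.
have rhon : rho != 0 by rewrite gt_eqF.
set r := rho^-1.
have r0 : 0 < r by rewrite invr_gt0.
have rn : r != 0 by rewrite gt_eqF.
have r1 : 1 <= r.
  rewrite /r invf_ge1 // /rho; have : P^-1 <= 1 by rewrite invf_le1 //.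
  have : 0 < S^-1 by rewrite invr_gt0.
  lra.
have rQ : r <= Q.
  rewrite /r -(invrK Q) lef_pV2 ?posrE ?invr_gt0 //; rewrite /rho; lra.
have riv : r^-1 = rho by rewrite /r invrK.
have key : (r / P - 1) * S = r.
  rewrite /r /rho; field.
  rewrite Sn Pn /=; apply/eqP; lra.
apply: (@le_trans _ _ (lpnorm r%:E t)).
  by have := @lp_exp_mono _ r%:E Q%:E n t; apply; rewrite lee_fin.
rewrite /=.
set T := \sum_(i < n) `|t i| `^ r.
have T0 : 0 <= T by apply: sumr_ge0 => i _; exact: powR_ge0.
have rPn : r / P != 0 by rewrite mulf_neq0 ?invr_eq0.
have e1 : forall i, `|t i `^ (r / P)| `^ P = `|t i| `^ r.
  move=> i; rewrite ger0_norm ?powR_ge0 // (ger0_norm (t0 i)) -powRrM divfK //.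
have e2 : forall i, `| `|t i `^ (r / P)| / t i| `^ S = `|t i| `^ r.
  move=> i; have [->|ti] := eqVneq (t i) 0.
    by rewrite powR0 // normr0 mul0r normr0 !powR0.
  have tp : 0 < t i by rewrite lt_def ti t0.
  have E : t i `^ (r / P) / t i = t i `^ (r / P - 1).
    by rewrite powRB ?powRr1 // ti implybT.
  rewrite (ger0_norm (powR_ge0 _ _)) E (ger0_norm (powR_ge0 _ _)).
  by rewrite -powRrM key (ger0_norm (t0 i)).
have adm : forall i, t i = 0 -> t i `^ (r / P) = 0 by move=> i ->; rewrite powR0.
have := hb _ adm.
rewrite /=.
set L1 := (X in X `^ P^-1).
set L2 := (X in X `^ S^-1).
have -> : L1 = T by apply: eq_bigr => i _; exact: e1.
have -> : L2 = T by apply: eq_bigr => i _; exact: e2.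
move=> h.
have [->|Tn] := eqVneq T 0; first by rewrite powR0 ?invr_eq0.
have Tp : 0 < T by rewrite lt_def Tn T0.
have eP : P^-1 = S^-1 + r^-1 by rewrite riv /rho addrC subrK.
move: h; rewrite eP powRD; last by rewrite Tn implybT.
rewrite mulrC ler_pM2r //; exact: powR_gt0.
Qed.
End Rl3.

Section G.
Context {R : realType} (X Y : BanachLattice R) (s : \bar R) (D : R).
Hypotheses (hs : (1 <= s)%E) (D0 : 0 <= D) (hD : rel_decomp_const X Y s D).

Lemma Gdrop n : forall (x : 'I_n -> X) (y : 'I_n -> Y), pw_disjoint x -> pw_disjoint y ->
  (forall i, x i = 0 -> y i = 0) ->
  `|\sum_(i < n) y i| <= D * lpnorm s (fun i => `|y i| / `|x i|) * `|\sum_(i < n) x i|.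
Proof.
elim: n => [|n IH] x y hx hy hxy.
  by rewrite !big_ord0 !normr0 mulr0.
case: (pselect (forall i, x i != 0 /\ y i != 0)) => [all|].
  by apply: hD => // i; case: (all i).
move=> /existsNP [i hi].
have yi0 : y i = 0.
  have [//|yn] := eqVneq (y i) 0; exfalso; apply: hi; split => //.
  by apply/eqP => x0; move: yn; rewrite hxy // eqxx.
have hx' : pw_disjoint (fun k => x (lift i k)).
  by move=> a b ab; apply: hx; rewrite (inj_eq lift_inj).
have hy' : pw_disjoint (fun k => y (lift i k)).
  by move=> a b ab; apply: hy; rewrite (inj_eq lift_inj).
have := IH _ _ hx' hy' (fun k => hxy (lift i k)).
rewrite [\sum_(k < n.+1) y k](bigD1_ord i) //= yi0 add0r => h.
apply: le_trans h _.
rewrite [\sum_(k < n.+1) x k](bigD1_ord i) //= addrC.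
apply: ler_pM; rewrite ?mulr_ge0 ?lp_ge0 //.
  by apply: ler_wpM2l => //; exact: (lp_drop s (fun k => `|y k| / `|x k|) i hs).
apply: bdisj_norm; apply: bdisj_sum => k _; apply: hx.
by rewrite eq_sym neq_lift.
Qed.

End G.

Lemma sd_zero (R : realType) (a b : nat -> R) k : seq_disjoint a b -> a k = 0 \/ b k = 0.
Proof.
move=> h; have := h k; rewrite /Order.min; case: ifP => _ /normr0_eq0 ->; by [left|right].
Qed.

Section M.
Context {R : realType} (X Y : BanachLattice R) (s p q : \bar R) (D : R).
Hypotheses (hs : (1 <= s)%E) (D0 : 0 <= D) (hD : rel_decomp_const X Y s D)
  (hp : (1 <= p)%E) (hps : (p <= s)%E) (hrep : lp_fin_rep_YU Y p)
  (hq : (1 <= q)%E) (hinv : inv_exp q + inv_exp s <= inv_exp p).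

Lemma lift_bound n (x : 'I_n -> X) (hx : pw_disjoint x) (z : 'I_n -> nat -> R)
  (eps : R) (eps0 : 0 <= eps) (zdisj : forall i j, i != j -> seq_disjoint (z i) (z j))
  (z1 : forall i, (YU_norm Y (z i) <= (1 + eps)%:E)%E)
  (b : 'I_n -> R) (adm : forall i, `|x i| = 0 -> b i = 0)
  N (w : 'I_N -> Y) (hw : @frakB R Y N w) :
  `|\sum_(k < N) (\sum_(i < n) b i * z i k) *: w k| <=
    D * lpnorm s (fun i => (1 + eps) * (`|b i| / `|x i|)) * `|\sum_(i < n) x i|.
Proof.
case: hw => wd w1.
pose y i := \sum_(k < N) (b i * z i k) *: w k.
have ey : \sum_(k < N) (\sum_(i < n) b i * z i k) *: w k = \sum_(i < n) y i.
  rewrite /y exchange_big /=; apply: eq_bigr => k _; exact: scaler_suml.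
have hy : pw_disjoint y.
  move=> i j ij; apply: bdisj_sum => k _; apply: bdisj_sym; apply: bdisj_sum => l _.
  have [kl|kl] := eqVneq k l.
    rewrite -kl; have [->|->] := sd_zero _ _ _ k (zdisj i j ij).
      by rewrite mulr0 scale0r; apply: bdisj_sym; exact: bdisj0.
    by rewrite mulr0 scale0r; exact: bdisj0.
  apply: bdisjZ; apply: bdisj_sym; apply: bdisjZ; apply: wd.
  exact: kl.
have hxy : forall i, x i = 0 -> y i = 0.
  move=> i xi; rewrite /y adm ?xi ?normr0 //; apply: big1 => k _.
  by rewrite mul0r scale0r.
rewrite ey; apply: le_trans (@Gdrop _ X Y s D hs D0 hD n x y hx hy hxy) _.
apply: ler_wpM2r; first exact: normr_ge0.
apply: ler_wpM2l => //; apply: lp_mono => // i.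
rewrite ger0_norm ?divr_ge0 // ger0_norm ?mulr_ge0 ?divr_ge0 //; last first.
  by rewrite addr_ge0.
rewrite mulrA; apply: ler_wpM2r; first by rewrite invr_ge0.
have -> : y i = b i *: \sum_(k < N) z i k *: w k.
  by rewrite /y scaler_sumr; apply: eq_bigr => k _; rewrite scalerA.
rewrite normrZ mulrC; apply: ler_wpM2r => //.
have h1 : ((`|\sum_(k < N) z i k *: w k|)%:E <= YUn_norm Y (fun k : 'I_N => z i k))%E.
  by apply: ereal_sup_ubound; exists w.
have h2 : (YUn_norm Y (fun k : 'I_N => z i k) <= YU_norm Y (z i))%E.
  by apply: ereal_sup_ubound; exists N.
by rewrite -lee_fin; apply: le_trans (z1 i); apply: le_trans h2.
Qed.

End M.

Section M3.
Context {R : realType} (X Y : BanachLattice R) (s p q : \bar R) (D : R).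
Hypotheses (hs : (1 <= s)%E) (D0 : 0 <= D) (hD : rel_decomp_const X Y s D)
  (hp : (1 <= p)%E) (hps : (p <= s)%E) (hrep : lp_fin_rep_YU Y p)
  (hq : (1 <= q)%E) (hinv : inv_exp q + inv_exp s <= inv_exp p).

Lemma main_est : lower_est_const X q D.
Proof.
move=> n x hx.
set c := `|\sum_(i < n) x i|.
have c0 : 0 <= c by apply: normr_ge0.
apply/ler_addgt0Pr => e e0.
have Dc0 : 0 <= D * c by apply: mulr_ge0.
have Dc1 : 0 < D * c + 1 by apply: ltr_wpDl.
pose eps := e / (D * c + 1).
have eps0 : 0 < eps by apply: divr_gt0.
have [z [zYU [zdisj zb]]] := hrep n eps eps0.
have z1 : forall i, (YU_norm Y (z i) <= (1 + eps)%:E)%E.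
  move=> i; have [_ h] := zb (fun j => (j == i)%:R).
  rewrite lp_unit // mulr1 in h.
  have -> : z i = (fun k => \sum_(j < n) (j == i)%:R * z j k).
    apply: funext => k; rewrite (bigD1 i) //= eqxx mul1r big1 ?addr0 //.
    by move=> j /negPf ->; rewrite mul0r.
  exact: h.
have C0 : 0 <= D * (1 + eps) * c.
  by rewrite mulr_ge0 // mulr_ge0 // addr_ge0 // ltW.
have K : forall b : 'I_n -> R, (forall i, `|x i| = 0 -> b i = 0) ->
    lpnorm p b <= (D * (1 + eps) * c) * lpnorm s (fun i => `|b i| / `|x i|).
  move=> b adm.
  have [h1 _] := zb b.
  have h2 : (YU_norm Y (fun k => (\sum_(i < n) b i * z i k)%R) <=
      (D * lpnorm s (fun i => (1 + eps) * (`|b i| / `|x i|)) * c)%:E)%E.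
    apply/ereal_supP => _ [N _ <-]; apply/ereal_supP => _ [w hw <-]; rewrite lee_fin.
    exact: (lift_bound X Y s D hs D0 hD n x hx z eps (ltW eps0) zdisj z1 b adm N w hw).
  have := le_trans h1 h2; rewrite lee_fin lp_scale //; last by rewrite addr_ge0 // ltW.
  move=> h; apply: le_trans h _.
  by rewrite le_eqVlt; apply/orP; left; apply/eqP; ring.
have := @holder_step _ p s q n (fun i => `|x i|) _ hp hps hq hinv (fun i => normr_ge0 (x i)) C0 K.
move=> h; apply: le_trans h _.
have -> : D * (1 + eps) * c = D * c + (D * c) / (D * c + 1) * e by rewrite /eps; ring.
rewrite lerD2l; apply: ler_piMl; first exact: ltW.
by rewrite ler_pdivrMr // mul1r lerDl.
Qed.

End M3.

Lemma nonzero_vec (R : realType) (X : BanachLattice R) : infinite_dim X -> exists v : X, v != 0.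
Proof.
move=> /(_ 1%N) [v hv]; exists (v ord0); apply/eqP => v0.
have h : \sum_(i < 1) (fun _ => (1:R)) i *: v i = 0 by rewrite big_ord1 scale1r.
by move: (hv _ h ord0) (@oner_neq0 R) => ->; rewrite eqxx.
Qed.

Lemma D_ge0 (R : realType) (X Y : BanachLattice R) (s : \bar R) (D : R) :
  infinite_dim X -> infinite_dim Y -> (1 <= s)%E -> rel_decomp_const X Y s D -> 0 <= D.
Proof.
move=> iX iY hs hD.
have [vx vx0] := nonzero_vec _ _ iX; have [vy vy0] := nonzero_vec _ _ iY.
have dj : forall (L : BanachLattice R) (v : L), pw_disjoint (fun _ : 'I_1 => v).
  by move=> L v i j; rewrite !ord1 eqxx.
have := hD 1%N (fun _ => vx) (fun _ => vy) (dj _ _) (fun _ => vx0) (dj _ _) (fun _ => vy0).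
rewrite !big_ord1.
have -> : (fun _ : 'I_1 => `|vy| / `|vx|) = (fun i => `|vy| / `|vx| * (i == ord0)%:R).
  by apply: funext => i; rewrite ord1 eqxx mulr1.
rewrite lp_scale ?divr_ge0 // lp_unit // mulr1 -mulrA divfK ?normr_eq0 //.
have : 0 < `|vy| by rewrite normr_gt0.
move=> h1 h2; nra.
Qed.

Theorem mainTheorem11 (R : realType) (X Y : BanachLattice R) (s p q : \bar R) :
  infinite_dim X -> infinite_dim Y ->
  (1 <= s)%E -> rel_decomposable X Y s ->
  (1 <= p)%E -> (p <= s)%E -> lp_fin_rep_YU Y p ->
  (1 <= q)%E -> inv_exp q + inv_exp s <= inv_exp p ->
  lower_estimate X q /\ (Mq X q <= Ds X Y s)%E.
Proof.
move=> iX iY hs [D hD] hp hps hrep hq hinv.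
have main : forall D', rel_decomp_const X Y s D' -> lower_est_const X q D'.
  move=> D' hD'; have D0 := D_ge0 _ _ _ _ _ iX iY hs hD'.
  exact: (main_est X Y s p q D' hs D0 hD' hp hps hrep hq hinv).
split; first by exists D; exact: main.
apply/ereal_infP => _ [D' hD' <-].
by apply: ereal_inf_lbound; exists D' => //; exact: main.
Qed.
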